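(* Let $\alpha$ be a unit speed Frenet curve in $\mathbb{E}^3$ and $\beta$ an osculating mate of $\alpha$ with principal normal $\bar N$. The following are equivalent: (i) the principal normal indicatrix $\bar N$ of $\beta$ is a general helix; (ii) $\beta$ is a $C$-slant helix; (iii) $\alpha$ is a slant helix.
   Context: $\alpha:I\to\mathbb{E}^3$ is parametrized by arclength $s$, with Frenet frame $\{T,N,B\}$, curvature $\kappa>0$, torsion $\tau$. An osculating mate of $\alpha$ is a curve $\beta(s)=\int(x_1T+x_2N)ds$ with smooth $x_1,x_2$, $x_1^2+x_2^2=1$ and $\beta''\perp\mathrm{span}\{T,N\}$; $\beta$ is assumed to be a Frenet curve, unit speed in $s$, with Frenet frame $\{\bar T,\bar N,\bar B\}$, curvature $\bar\kappa$, torsion $\bar\tau$. The principal normal indicatrix of $\beta$ is the spherical curve $s\mapsto\bar N(s)$. A general helix is a curve whose tangent makes a constant angle with a fixed direction (equivalently torsion/curvature is constant). A slant helix is a curve whose principal normal makes a constant angle with a fixed direction. For a Frenet curve with frame $\{T,N,B\}$, curvature $k$, torsion $t$, the unit Darboux vector is $W=\frac{tT+kB}{\sqrt{k^2+t^2}}$, and $C=W\times N$; the curve is a $C$-slant helix if the unit vector $C$ makes a constant angle with a fixed direction. *)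

(* Defs.v *)
From Stdlib Require Import Reals.
From Coquelicot Require Import Coquelicot.
Open Scope R_scope.

Definition V3 : Type := (R * R * R)%type.
Definition v1 (v : V3) : R := fst (fst v).
Definition v2 (v : V3) : R := snd (fst v).
Definition v3 (v : V3) : R := snd v.
Definition mkV (a b c : R) : V3 := (a, b, c).

Definition vadd (u v : V3) : V3 := mkV (v1 u + v1 v) (v2 u + v2 v) (v3 u + v3 v).
Definition vscal (k : R) (v : V3) : V3 := mkV (k * v1 v) (k * v2 v) (k * v3 v).
Definition vdot (u v : V3) : R := v1 u * v1 v + v2 u * v2 v + v3 u * v3 v.
Definition vcross (u v : V3) : V3 :=
  mkV (v2 u * v3 v - v3 u * v2 v) (v3 u * v1 v - v1 u * v3 v) (v1 u * v2 v - v2 u * v1 v).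
Definition vnorm (v : V3) : R := sqrt (vdot v v).
Definition vzero : V3 := mkV 0 0 0.

Definition vD (f : R -> V3) (s : R) : V3 :=
  mkV (Derive (fun t => v1 (f t)) s) (Derive (fun t => v2 (f t)) s) (Derive (fun t => v3 (f t)) s).

Definition nonempty_open_interval (I : R -> Prop) : Prop :=
  (exists s, I s) /\
  (forall x y z, I x -> I z -> x <= y <= z -> I y) /\
  (forall x, I x -> exists eps, 0 < eps /\ forall y, Rabs (y - x) < eps -> I y).

Definition smooth_fun_on (I : R -> Prop) (f : R -> R) : Prop :=
  forall (n : nat) (s : R), I s -> ex_derive_n f n s.
Definition smooth_on (I : R -> Prop) (g : R -> V3) : Prop :=
  smooth_fun_on I (fun t => v1 (g t)) /\ smooth_fun_on I (fun t => v2 (g t)) /\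
  smooth_fun_on I (fun t => v3 (g t)).

(** Frenet apparatus of a unit speed curve g (arclength parameter s):
    T' = k N, N' = -k T + t B, B' = -t N. *)
Definition tangent (g : R -> V3) (s : R) : V3 := vD g s.
Definition curvature (g : R -> V3) (s : R) : R := vnorm (vD (tangent g) s).
Definition normal (g : R -> V3) (s : R) : V3 := vscal (/ curvature g s) (vD (tangent g) s).
Definition binormal (g : R -> V3) (s : R) : V3 := vcross (tangent g s) (normal g s).
Definition torsion (g : R -> V3) (s : R) : R := vdot (vD (normal g) s) (binormal g s).

Definition darboux_unit (g : R -> V3) (s : R) : V3 :=
  vscal (/ sqrt (curvature g s ^ 2 + torsion g s ^ 2))
    (vadd (vscal (torsion g s) (tangent g s)) (vscal (curvature g s) (binormal g s))).
Definition Cvec (g : R -> V3) (s : R) : V3 := vcross (darboux_unit g s) (normal g s).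

Definition unit_speed_frenet_on (I : R -> Prop) (g : R -> V3) : Prop :=
  smooth_on I g /\
  (forall s, I s -> vnorm (tangent g s) = 1) /\
  (forall s, I s -> 0 < curvature g s).

Definition osculating_mate_on (I : R -> Prop) (alpha beta : R -> V3) : Prop :=
  exists x1 x2 : R -> R,
    smooth_fun_on I x1 /\ smooth_fun_on I x2 /\
    (forall s, I s -> x1 s ^ 2 + x2 s ^ 2 = 1) /\
    (forall s, I s -> vD beta s =
        vadd (vscal (x1 s) (tangent alpha s)) (vscal (x2 s) (normal alpha s))) /\
    (forall s, I s -> vdot (vD (vD beta) s) (tangent alpha s) = 0 /\
                      vdot (vD (vD beta) s) (normal alpha s) = 0) /\
    unit_speed_frenet_on I beta.

Definition general_helix_on (I : R -> Prop) (g : R -> V3) : Prop :=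
  (forall s, I s -> vD g s <> vzero) /\
  exists (u : V3) (c : R), vnorm u = 1 /\
    forall s, I s -> vdot (vscal (/ vnorm (vD g s)) (vD g s)) u = c.

Definition slant_helix_on (I : R -> Prop) (g : R -> V3) : Prop :=
  exists (u : V3) (c : R), vnorm u = 1 /\ forall s, I s -> vdot (normal g s) u = c.

Definition C_slant_helix_on (I : R -> Prop) (g : R -> V3) : Prop :=
  exists (u : V3) (c : R), vnorm u = 1 /\ forall s, I s -> vdot (Cvec g s) u = c.

(* Main.v *)
Require Import Defs.
From Stdlib Require Import Reals Lra.
From Coquelicot Require Import Coquelicot.
Open Scope R_scope.

Ltac vd := repeat match goal with v : V3 |- _ => let a := fresh "a" in let b := fresh "b" in let c := fresh "c" in destruct v as [[a b] c] end;
  unfold vadd, vscal, vdot, vcross, mkV, v1, v2, v3 in *; simpl in *.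

Lemma veq (a b : V3) : v1 a = v1 b -> v2 a = v2 b -> v3 a = v3 b -> a = b.
Proof. destruct a as [[a1 a2] a3], b as [[b1 b2] b3]; unfold v1,v2,v3; simpl; intros; subst; auto. Qed.

Ltac veqr := apply veq; vd; ring.

Definition onf (T N : V3) := vdot T T = 1 /\ vdot N N = 1 /\ vdot T N = 0.
Definition lin (T N : V3) (a b c : R) : V3 :=
  vadd (vscal a T) (vadd (vscal b N) (vscal c (vcross T N))).

Lemma dot_comm u v : vdot u v = vdot v u. Proof. vd; ring. Qed.
Lemma dot_addl u v w : vdot (vadd u v) w = vdot u w + vdot v w. Proof. vd; ring. Qed.
Lemma dot_scall k u w : vdot (vscal k u) w = k * vdot u w. Proof. vd; ring. Qed.

Lemma lin_expand T N v : onf T N -> v = lin T N (vdot v T) (vdot v N) (vdot v (vcross T N)).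
Proof.
  intros [h1 [h2 h3]].
  assert (Hc : vscal (vdot T (vcross N (vcross T N))) v =
     vadd (vscal (vdot v (vcross N (vcross T N))) T)
       (vadd (vscal (vdot v (vcross (vcross T N) T)) N) (vscal (vdot v (vcross T N)) (vcross T N)))) by veqr.
  assert (e1 : vdot T (vcross N (vcross T N)) = vdot N N * vdot T T - vdot T N * vdot T N) by (vd; ring).
  assert (e2 : vdot v (vcross N (vcross T N)) = vdot N N * vdot v T - vdot T N * vdot v N) by (vd; ring).
  assert (e3 : vdot v (vcross (vcross T N) T) = vdot T T * vdot v N - vdot T N * vdot v T) by (vd; ring).
  rewrite e1, e2, e3, h1, h2, h3 in Hc.
  transitivity (vscal (1*1-0*0) v); [veqr|]. rewrite Hc. unfold lin. veqr.
Qed.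

Lemma lin_dot T N a b c a' b' c' : onf T N ->
  vdot (lin T N a b c) (lin T N a' b' c') = a*a' + b*b' + c*c'.
Proof.
  intros [h1 [h2 h3]].
  assert (G : vdot (lin T N a b c) (lin T N a' b' c') =
    a*a'*vdot T T + (a*b'+b*a')*vdot T N + (a*c'+c*a')*vdot T (vcross T N)
    + b*b'*vdot N N + (b*c'+c*b')*vdot N (vcross T N) + c*c'*vdot (vcross T N) (vcross T N))
    by (unfold lin; vd; ring).
  assert (e1 : vdot T (vcross T N) = 0) by (vd; ring).
  assert (e2 : vdot N (vcross T N) = 0) by (vd; ring).
  assert (e3 : vdot (vcross T N) (vcross T N) = vdot T T * vdot N N - vdot T N * vdot T N) by (vd; ring).
  rewrite G, e1, e2, e3, h1, h2, h3. ring.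
Qed.

Lemma linT T N : T = lin T N 1 0 0. Proof. unfold lin; veqr. Qed.
Lemma linN T N : N = lin T N 0 1 0. Proof. unfold lin; veqr. Qed.
Lemma linB T N : vcross T N = lin T N 0 0 1. Proof. unfold lin; veqr. Qed.
Lemma lin_scal T N k a b c : vscal k (lin T N a b c) = lin T N (k*a) (k*b) (k*c).
Proof. unfold lin; veqr. Qed.
Lemma lin_add T N a b c a' b' c' : vadd (lin T N a b c) (lin T N a' b' c') = lin T N (a+a') (b+b') (c+c').
Proof. unfold lin; veqr. Qed.
Lemma lin_eq T N a b c a' b' c' : a = a' -> b = b' -> c = c' -> lin T N a b c = lin T N a' b' c'.
Proof. intros; subst; auto. Qed.

Lemma lin_dotT T N a b c : onf T N -> vdot (lin T N a b c) T = a.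
Proof. intros h. transitivity (vdot (lin T N a b c) (lin T N 1 0 0)); [f_equal; apply linT|]. rewrite lin_dot; auto; ring. Qed.
Lemma lin_dotN T N a b c : onf T N -> vdot (lin T N a b c) N = b.
Proof. intros h. transitivity (vdot (lin T N a b c) (lin T N 0 1 0)); [f_equal; apply linN|]. rewrite lin_dot; auto; ring. Qed.
Lemma lin_dotB T N a b c : onf T N -> vdot (lin T N a b c) (vcross T N) = c.
Proof. intros h. transitivity (vdot (lin T N a b c) (lin T N 0 0 1)); [f_equal; apply linB|]. rewrite lin_dot; auto; ring. Qed.

Lemma lin_ext T N v w : onf T N -> vdot v T = vdot w T -> vdot v N = vdot w N ->
  vdot v (vcross T N) = vdot w (vcross T N) -> v = w.
Proof. intros h e1 e2 e3. rewrite (lin_expand T N v h), (lin_expand T N w h). rewrite e1, e2, e3; auto. Qed.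

Lemma lin_cross T N a b c a' b' c' : onf T N ->
  vcross (lin T N a b c) (lin T N a' b' c') = lin T N (b*c' - c*b') (c*a' - a*c') (a*b' - b*a').
Proof.
  intros h. pose proof h as [h1 [h2 h3]].
  assert (BC : forall u w p q, vdot (vcross u w) (vcross p q) = vdot u p * vdot w q - vdot u q * vdot w p)
    by (intros; vd; ring).
  assert (TT : T = vcross N (vcross T N)).
  { assert (X : vcross N (vcross T N) = vadd (vscal (vdot N N) T) (vscal (- vdot N T) N)) by veqr.
    rewrite X, (dot_comm N T), h2, h3. veqr. }
  assert (NN : N = vcross (vcross T N) T).
  { assert (X : vcross (vcross T N) T = vadd (vscal (vdot T T) N) (vscal (- vdot N T) T)) by veqr.
    rewrite X, (dot_comm N T), h1, h3. veqr. }
  apply (lin_ext T N); [exact h| | |].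
  - rewrite lin_dotT by auto. transitivity (vdot (vcross (lin T N a b c) (lin T N a' b' c')) (vcross N (vcross T N))); [f_equal; exact TT|]. rewrite BC.
    rewrite !lin_dotN, !lin_dotB by auto. ring.
  - rewrite lin_dotN by auto. transitivity (vdot (vcross (lin T N a b c) (lin T N a' b' c')) (vcross (vcross T N) T)); [f_equal; exact NN|]. rewrite BC.
    rewrite !lin_dotT, !lin_dotB by auto. ring.
  - rewrite lin_dotB by auto. rewrite BC.
    rewrite !lin_dotT, !lin_dotN by auto. ring.
Qed.

Lemma lin_norm T N a b c : onf T N -> vnorm (lin T N a b c) = sqrt (a*a+b*b+c*c).
Proof. intros h; unfold vnorm; rewrite lin_dot; auto. Qed.

Definition vdiff (F : R -> V3) s := ex_derive (fun t => v1 (F t)) s /\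
  ex_derive (fun t => v2 (F t)) s /\ ex_derive (fun t => v3 (F t)) s.

Lemma exd_plus (f g : R -> R) x : ex_derive f x -> ex_derive g x -> ex_derive (fun t => f t + g t) x.
Proof. exact (ex_derive_plus f g x). Qed.
Lemma exd_minus (f g : R -> R) x : ex_derive f x -> ex_derive g x -> ex_derive (fun t => f t - g t) x.
Proof. exact (ex_derive_minus f g x). Qed.
Lemma exd_mult (f g : R -> R) x : ex_derive f x -> ex_derive g x -> ex_derive (fun t => f t * g t) x.
Proof. exact (ex_derive_mult f g x). Qed.

Lemma D_dot F G s : vdiff F s -> vdiff G s ->
  ex_derive (fun t => vdot (F t) (G t)) s /\
  Derive (fun t => vdot (F t) (G t)) s = vdot (vD F s) (G s) + vdot (F s) (vD G s).
Proof.
  intros [f1 [f2 f3]] [g1 [g2 g3]]. unfold vdot. split.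
  - apply exd_plus; [apply exd_plus|]; apply exd_mult; auto.
  - rewrite Derive_plus; [|apply exd_plus; apply exd_mult; auto|apply exd_mult; auto].
    rewrite Derive_plus; [|apply exd_mult; auto|apply exd_mult; auto].
    rewrite !Derive_mult by auto. unfold vD, v1, v2, v3, mkV; simpl. ring.
Qed.

Lemma D_scal (f : R -> R) F s : ex_derive f s -> vdiff F s ->
  vdiff (fun t => vscal (f t) (F t)) s /\
  vD (fun t => vscal (f t) (F t)) s = vadd (vscal (Derive f s) (F s)) (vscal (f s) (vD F s)).
Proof.
  intros hf [f1 [f2 f3]]. split.
  - split; [|split]; apply exd_mult; auto.
  - apply veq; unfold vD, vadd, vscal, v1, v2, v3, mkV; simpl; rewrite Derive_mult; auto.
Qed.

Lemma D_add F G s : vdiff F s -> vdiff G s ->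
  vdiff (fun t => vadd (F t) (G t)) s /\
  vD (fun t => vadd (F t) (G t)) s = vadd (vD F s) (vD G s).
Proof.
  intros [f1 [f2 f3]] [g1 [g2 g3]]. split.
  - split; [|split]; apply exd_plus; auto.
  - apply veq; unfold vD, vadd, vscal, v1, v2, v3, mkV; simpl; rewrite Derive_plus; auto.
Qed.

Lemma D_cross F G s : vdiff F s -> vdiff G s -> vdiff (fun t => vcross (F t) (G t)) s.
Proof.
  intros [f1 [f2 f3]] [g1 [g2 g3]].
  split; [|split]; apply exd_minus; apply exd_mult; auto.
Qed.

Section Loc.
Variable I : R -> Prop.
Hypothesis HI : nonempty_open_interval I.

Lemma loc_of s : I s -> forall P : R -> Prop, (forall t, I t -> P t) -> locally s P.
Proof.
  intros Hs P HP. destruct HI as [_ [_ H]]. destruct (H s Hs) as [eps [Heps Hb]].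
  exists (mkposreal eps Heps). intros y Hy. apply HP, Hb. exact Hy.
Qed.

Lemma Derive_on (f g : R -> R) s : I s -> (forall t, I t -> f t = g t) -> Derive f s = Derive g s.
Proof. intros Hs H. apply Derive_ext_loc. apply (loc_of s Hs). exact H. Qed.

Lemma exd_on (f g : R -> R) s : I s -> (forall t, I t -> f t = g t) -> ex_derive f s -> ex_derive g s.
Proof. intros Hs H. apply ex_derive_ext_loc. apply (loc_of s Hs). exact H. Qed.

Lemma Derive_const_on (f : R -> R) c s : I s -> (forall t, I t -> f t = c) -> Derive f s = 0.
Proof. intros Hs H. rewrite (Derive_on f (fun _ => c) s Hs H). apply Derive_const. Qed.

Lemma vD_on F G s : I s -> (forall t, I t -> F t = G t) -> vD F s = vD G s.
Proof.
  intros Hs H. unfold vD.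
  rewrite (Derive_on (fun t => v1 (F t)) (fun t => v1 (G t)) s Hs), (Derive_on (fun t => v2 (F t)) (fun t => v2 (G t)) s Hs),
    (Derive_on (fun t => v3 (F t)) (fun t => v3 (G t)) s Hs); auto; intros t Ht; rewrite H; auto.
Qed.

Lemma vdiff_on F G s : I s -> (forall t, I t -> F t = G t) -> vdiff F s -> vdiff G s.
Proof.
  intros Hs H [h1 [h2 h3]]. split; [|split].
  - apply (exd_on (fun t => v1 (F t))); auto; intros t Ht; rewrite H; auto.
  - apply (exd_on (fun t => v2 (F t))); auto; intros t Ht; rewrite H; auto.
  - apply (exd_on (fun t => v3 (F t))); auto; intros t Ht; rewrite H; auto.
Qed.
End Loc.

Lemma dot_self_ge0 v : 0 <= vdot v v.
Proof. vd. nra. Qed.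

Section Frenet.
Variable I : R -> Prop.
Hypothesis HI : nonempty_open_interval I.
Variable g : R -> V3.
Hypothesis Hg : unit_speed_frenet_on I g.

Lemma fr_T s : I s -> vdiff (tangent g) s.
Proof.
  intros Hs. destruct Hg as [[h1 [h2 h3]] _].
  split; [|split]; [exact (h1 2%nat s Hs)|exact (h2 2%nat s Hs)|exact (h3 2%nat s Hs)].
Qed.

Lemma fr_T' s : I s -> vdiff (vD (tangent g)) s.
Proof.
  intros Hs. destruct Hg as [[h1 [h2 h3]] _].
  split; [|split]; [exact (h1 3%nat s Hs)|exact (h2 3%nat s Hs)|exact (h3 3%nat s Hs)].
Qed.

Lemma fr_TT s : I s -> vdot (tangent g s) (tangent g s) = 1.
Proof.
  intros Hs. destruct Hg as [_ [h _]]. specialize (h s Hs). unfold vnorm in h.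
  rewrite <- (sqrt_sqrt (vdot (tangent g s) (tangent g s))) by apply dot_self_ge0.
  rewrite h; ring.
Qed.

Lemma fr_Kpos s : I s -> 0 < curvature g s.
Proof. intros Hs. destruct Hg as [_ [_ h]]. auto. Qed.

Lemma fr_Tp s : I s -> vD (tangent g) s = vscal (curvature g s) (normal g s).
Proof.
  intros Hs. pose proof (fr_Kpos s Hs). unfold normal.
  apply veq; unfold vscal, v1, v2, v3, mkV; simpl; field; lra.
Qed.

Lemma fr_K s : I s -> ex_derive (curvature g) s.
Proof.
  intros Hs. pose proof (fr_Kpos s Hs) as hk.
  destruct (D_dot _ _ s (fr_T' s Hs) (fr_T' s Hs)) as [hd _].
  destruct hd as [df hdf].
  exists (df / (2 * sqrt (vdot (vD (tangent g) s) (vD (tangent g) s)))).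
  apply (is_derive_sqrt (fun t => vdot (vD (tangent g) t) (vD (tangent g) t))); auto.
  destruct (Rle_or_lt (vdot (vD (tangent g) s) (vD (tangent g) s)) 0) as [h|h]; auto.
  unfold curvature, vnorm in hk. rewrite sqrt_neg_0 in hk; lra.
Qed.

Lemma fr_N s : I s -> vdiff (normal g) s.
Proof.
  intros Hs. pose proof (fr_Kpos s Hs) as hk.
  refine (proj1 (D_scal (fun t => / curvature g t) (vD (tangent g)) s _ (fr_T' s Hs))).
  apply ex_derive_inv; [apply fr_K; auto| lra].
Qed.

Lemma fr_onf s : I s -> onf (tangent g s) (normal g s).
Proof.
  intros Hs. pose proof (fr_Kpos s Hs) as hk. split; [|split].
  - apply fr_TT; auto.
  - unfold normal. rewrite !dot_scall. rewrite (dot_comm _ (vscal _ _)), dot_scall.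
    unfold curvature, vnorm. unfold curvature, vnorm in hk.
    set (x := vdot (vD (tangent g) s) (vD (tangent g) s)) in *.
    assert (0 <= x) by apply dot_self_ge0.
    rewrite <- (sqrt_sqrt x) at 3 by auto. field. lra.
  - destruct (D_dot _ _ s (fr_T s Hs) (fr_T s Hs)) as [_ hd].
    rewrite (Derive_const_on I HI _ 1 s Hs) in hd by (intros; apply fr_TT; auto).
    rewrite (dot_comm (tangent g s) (vD _ s)) in hd. rewrite fr_Tp in hd by auto.
    rewrite dot_scall in hd. rewrite dot_comm.
    assert (curvature g s * vdot (normal g s) (tangent g s) = 0) by lra.
    destruct (Rmult_integral _ _ H); lra.
Qed.

Lemma fr_B s : I s -> vdiff (binormal g) s.
Proof. intros Hs. apply D_cross; [apply fr_T|apply fr_N]; auto. Qed.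

Lemma fr_Bp s : I s -> vD (binormal g) s = lin (tangent g s) (normal g s) 0 (- torsion g s) 0.
Proof.
  intros Hs. pose proof (fr_onf s Hs) as ho.
  rewrite (lin_expand _ _ (vD (binormal g) s) ho). apply lin_eq.
  - destruct (D_dot _ _ s (fr_B s Hs) (fr_T s Hs)) as [_ hd].
    rewrite (Derive_const_on I HI _ 0 s Hs) in hd by (intros; unfold binormal; vd; ring).
    rewrite fr_Tp in hd by auto. rewrite (dot_comm (binormal g s)), dot_scall in hd.
    assert (vdot (normal g s) (binormal g s) = 0) by (unfold binormal; vd; ring).
    rewrite H in hd. lra.
  - destruct (D_dot _ _ s (fr_B s Hs) (fr_N s Hs)) as [_ hd].
    rewrite (Derive_const_on I HI _ 0 s Hs) in hd by (intros; unfold binormal; vd; ring).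
    rewrite (dot_comm (binormal g s)) in hd. unfold torsion. lra.
  - destruct (D_dot _ _ s (fr_B s Hs) (fr_B s Hs)) as [_ hd].
    rewrite (Derive_const_on I HI _ 1 s Hs) in hd.
    + rewrite (dot_comm (binormal g s) (vD _ s)) in hd. change (vcross (tangent g s) (normal g s)) with (binormal g s). lra.
    + intros t Ht. destruct (fr_onf t Ht) as [a [b c]]. unfold binormal.
      assert (E : vdot (vcross (tangent g t) (normal g t)) (vcross (tangent g t) (normal g t)) =
        vdot (tangent g t) (tangent g t) * vdot (normal g t) (normal g t)
        - vdot (tangent g t) (normal g t) * vdot (tangent g t) (normal g t)) by (vd; ring).
      rewrite E, a, b, c. ring.
Qed.
End Frenet.

Section Main.
Variable I : R -> Prop.
Hypothesis HI : nonempty_open_interval I.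
Variables alpha beta : R -> V3.
Hypothesis Halpha : unit_speed_frenet_on I alpha.
Variables x1 x2 : R -> R.
Hypothesis hx1 : smooth_fun_on I x1.
Hypothesis hx2 : smooth_fun_on I x2.
Hypothesis hsum : forall s, I s -> x1 s ^ 2 + x2 s ^ 2 = 1.
Hypothesis hb1 : forall s, I s -> vD beta s =
        vadd (vscal (x1 s) (tangent alpha s)) (vscal (x2 s) (normal alpha s)).
Hypothesis hperp : forall s, I s -> vdot (vD (vD beta) s) (tangent alpha s) = 0 /\
                      vdot (vD (vD beta) s) (normal alpha s) = 0.
Hypothesis Hbf : unit_speed_frenet_on I beta.

Let T t := tangent alpha t.
Let N t := normal alpha t.
Let tau t := torsion alpha t.

Lemma M1 t : I t -> vD (vD beta) t = lin (T t) (N t) 0 0 (x2 t * tau t).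
Proof.
  intros Ht. pose proof (fr_onf I HI alpha Halpha t Ht) as ho.
  rewrite (lin_expand _ _ (vD (vD beta) t) ho). destruct (hperp t Ht) as [p1 p2].
  apply lin_eq; auto.
  rewrite (vD_on I HI (vD beta) (fun u => vadd (vscal (x1 u) (tangent alpha u)) (vscal (x2 u) (normal alpha u))) t Ht hb1).
  assert (e1 : ex_derive x1 t) by exact (hx1 1%nat t Ht).
  assert (e2 : ex_derive x2 t) by exact (hx2 1%nat t Ht).
  destruct (D_scal x1 (tangent alpha) t e1 (fr_T I alpha Halpha t Ht)) as [d1 r1].
  destruct (D_scal x2 (normal alpha) t e2 (fr_N I alpha Halpha t Ht)) as [d2 r2].
  destruct (D_add _ _ t d1 d2) as [_ r3].
  rewrite r3, r1, r2. rewrite !dot_addl, !dot_scall.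
  rewrite (fr_Tp I alpha Halpha t Ht), dot_scall.
  assert (a1 : vdot (tangent alpha t) (vcross (tangent alpha t) (normal alpha t)) = 0) by (vd; ring).
  assert (a2 : vdot (normal alpha t) (vcross (tangent alpha t) (normal alpha t)) = 0) by (vd; ring).
  rewrite a1, a2. unfold tau, torsion, binormal. ring.
Qed.

Lemma M2 t : I t -> curvature beta t = Rabs (x2 t * tau t) /\ x2 t * tau t <> 0.
Proof.
  intros Ht. pose proof (fr_onf I HI alpha Halpha t Ht) as ho.
  assert (E : curvature beta t = Rabs (x2 t * tau t)).
  { unfold curvature, tangent. rewrite M1 by auto. rewrite lin_norm by auto.
    rewrite <- sqrt_Rsqr_abs. f_equal. unfold Rsqr. ring. }
  split; auto. intros h. pose proof (fr_Kpos I beta Hbf t Ht). rewrite E, h, Rabs_R0 in H. lra.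
Qed.

Definition ee t := x2 t * torsion alpha t / Rabs (x2 t * torsion alpha t).

Lemma ee_facts t : I t -> ee t * ee t = 1 /\ Rabs (x2 t * tau t) * ee t = x2 t * tau t.
Proof.
  intros Ht. destruct (M2 t Ht) as [_ h]. unfold ee. fold (tau t).
  set (k := x2 t * tau t) in *.
  destruct (Rle_or_lt 0 k) as [h0|h0].
  - rewrite Rabs_right by lra. split; field; auto.
  - rewrite Rabs_left by lra. split; field; auto.
Qed.

Lemma M3 t : I t -> normal beta t = lin (T t) (N t) 0 0 (ee t).
Proof.
  intros Ht. unfold normal at 1. destruct (M2 t Ht) as [E h]. rewrite E.
  change (vD (tangent beta) t) with (vD (vD beta) t). rewrite M1 by auto. rewrite lin_scal. apply lin_eq; try ring.
  unfold ee; fold (tau t). unfold Rdiv; ring.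
Qed.

Lemma M4 s : I s -> vD (normal beta) s = lin (T s) (N s) 0 (- (ee s * tau s)) 0.
Proof.
  intros Hs.
  set (E := fun u => vdot (normal beta u) (binormal alpha u)).
  assert (HE : forall u, I u -> E u = ee u).
  { intros u Hu. unfold E. rewrite M3 by auto. unfold binormal. apply lin_dotB. apply (fr_onf I HI alpha Halpha u Hu). }
  assert (Hn : forall u, I u -> normal beta u = vscal (E u) (binormal alpha u)).
  { intros u Hu. rewrite HE by auto. rewrite M3 by auto. unfold binormal. rewrite linB, lin_scal.
    apply lin_eq; ring. }
  rewrite (vD_on I HI _ _ s Hs Hn).
  destruct (D_dot _ _ s (fr_N I beta Hbf s Hs) (fr_B I alpha Halpha s Hs)) as [dE _].
  fold E in dE.
  destruct (D_scal E (binormal alpha) s dE (fr_B I alpha Halpha s Hs)) as [_ r].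
  rewrite r.
  assert (E' : Derive E s = 0).
  { assert (h0 : Derive (fun u => E u * E u) s = 0).
    { apply (Derive_const_on I HI _ 1 s Hs). intros u Hu. rewrite HE by auto. apply ee_facts; auto. }
    rewrite Derive_mult in h0 by auto.
    destruct (ee_facts s Hs) as [q _]. rewrite <- (HE s Hs) in q.
    assert (2 * E s * Derive E s = 0) by lra.
    destruct (Rmult_integral _ _ H); auto. destruct (Rmult_integral _ _ H0); try lra.
    rewrite H1 in q; lra. }
  rewrite E', HE by auto. rewrite (fr_Bp I HI alpha Halpha s Hs). unfold binormal. rewrite linB.
  rewrite !lin_scal, lin_add. fold (T s) (N s) (tau s). apply lin_eq; ring.
Qed.

Lemma Tb s : I s -> tangent beta s = lin (T s) (N s) (x1 s) (x2 s) 0.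
Proof. intros Hs. unfold tangent at 1. rewrite hb1 by auto. unfold lin; veqr. Qed.

Lemma M5 s : I s -> torsion beta s = x1 s * tau s.
Proof.
  intros Hs. pose proof (fr_onf I HI alpha Halpha s Hs) as ho.
  unfold torsion at 1, binormal. rewrite M4, Tb, M3 by auto. rewrite lin_cross by auto.
  rewrite lin_dot by auto. destruct (ee_facts s Hs) as [q _].
  transitivity (x1 s * tau s * (ee s * ee s)); [ring| rewrite q; ring].
Qed.

Definition sig s := - (ee s * torsion alpha s) / Rabs (torsion alpha s).

Lemma M6 s : I s -> Cvec beta s = lin (T s) (N s) 0 (sig s) 0.
Proof.
  intros Hs. pose proof (fr_onf I HI alpha Halpha s Hs) as ho.
  destruct (M2 s Hs) as [K hk]. destruct (ee_facts s Hs) as [q1 q2].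
  unfold Cvec, darboux_unit, binormal. rewrite K, M5, Tb, M3 by auto.
  repeat ((rewrite lin_cross by auto) || rewrite lin_scal || rewrite lin_add).
  assert (hS : sqrt (Rabs (x2 s * tau s) ^ 2 + (x1 s * tau s) ^ 2) = Rabs (tau s)).
  { rewrite pow2_abs. rewrite <- sqrt_Rsqr_abs. f_equal. unfold Rsqr.
    transitivity (tau s * tau s * (x1 s ^ 2 + x2 s ^ 2)); [ring|]. rewrite hsum by auto. ring. }
  rewrite hS. set (A := Rabs (x2 s * tau s)) in *. set (Q := / Rabs (tau s)).
  apply lin_eq.
  - transitivity (Q * x1 s * ee s * (x2 s * tau s - A * ee s)); [ring|]. rewrite q2; ring.
  - transitivity (- (Q * ee s * (tau s * (x1 s ^ 2 + x2 s ^ 2) + x2 s * (A * ee s - x2 s * tau s)))); [ring|].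
    rewrite q2, hsum by auto. unfold sig, Q; fold (tau s). unfold Rdiv; ring.
  - ring.
Qed.

Lemma tau_nz s : I s -> tau s <> 0.
Proof. intros Hs h. destruct (M2 s Hs) as [_ hk]. apply hk. rewrite h; ring. Qed.

Lemma M7 s : I s -> vD (normal beta) s <> vzero /\ vscal (/ vnorm (vD (normal beta) s)) (vD (normal beta) s) = lin (T s) (N s) 0 (sig s) 0.
Proof.
  intros Hs. pose proof (fr_onf I HI alpha Halpha s Hs) as ho.
  destruct (ee_facts s Hs) as [q1 _]. pose proof (tau_nz s Hs) as hz.
  assert (hn : vnorm (vD (normal beta) s) = Rabs (tau s)).
  { rewrite M4, lin_norm by auto. rewrite <- sqrt_Rsqr_abs. f_equal. unfold Rsqr.
    transitivity (tau s * tau s * (ee s * ee s)); [ring|]. rewrite q1; ring. }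
  split.
  - intros h. rewrite h in hn. unfold vnorm, vdot, vzero, mkV, v1, v2, v3 in hn; simpl in hn.
    replace (0*0+0*0+0*0) with 0 in hn by ring. rewrite sqrt_0 in hn.
    pose proof (Rabs_pos_lt _ hz). lra.
  - rewrite hn, M4, lin_scal by auto. apply lin_eq; try ring. unfold sig; fold (tau s). unfold Rdiv; ring.
Qed.

Lemma M8 s : I s -> (0 < x2 s -> sig s = -1) /\ (x2 s < 0 -> sig s = 1).
Proof.
  intros Hs. pose proof (tau_nz s Hs) as hz. unfold sig, ee. fold (tau s).
  rewrite Rabs_mult.
  split; intros hx; [rewrite (Rabs_right (x2 s)) by lra | rewrite (Rabs_left (x2 s)) by lra];
  (destruct (Rle_or_lt 0 (tau s)) as [ht|ht];
   [rewrite (Rabs_right (tau s)) by lra | rewrite (Rabs_left (tau s)) by lra]);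
  field; repeat split; lra.
Qed.

Lemma sign_lt (f : R -> R) : (forall a, I a -> continuity_pt f a) -> (forall a, I a -> f a <> 0) ->
  forall s t, I s -> I t -> s < t -> 0 < f s * f t.
Proof.
  intros hc hn s t Hs Ht hst. destruct (Rlt_or_le 0 (f s * f t)) as [h|h]; auto. exfalso.
  destruct HI as [_ [conv _]].
  assert (hI : forall a, s <= a <= t -> I a) by (intros a ha; apply (conv s a t); auto).
  pose proof (hn s Hs). pose proof (hn t Ht).
  destruct (Rlt_or_le (f s) 0) as [h1|h1].
  - assert (0 < f t) by (destruct (Rlt_or_le 0 (f t)); auto; assert (f t < 0) by lra; nra).
    assert (hc' : forall a, s <= a <= t -> continuity_pt f a) by (intros a ha; apply hc, hI; auto).
    destruct (Ranalysis5.IVT_interv f s t hc' hst h1 H1) as [z [hz1 hz2]].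
    apply (hn z); auto.
  - assert (0 < f s) by lra.
    assert (f t < 0) by (destruct (Rlt_or_le (f t) 0); auto; assert (0 < f t) by lra; nra).
    assert (hc' : forall a, s <= a <= t -> continuity_pt (fun x => - f x) a)
      by (intros a ha; apply (continuity_pt_opp f), hc, hI; auto).
    destruct (Ranalysis5.IVT_interv (fun x => - f x) s t hc' hst) as [z [hz1 hz2]]; try lra.
    apply (hn z); [apply hI; auto| lra].
Qed.

Lemma sign_const (f : R -> R) : (forall a, I a -> continuity_pt f a) -> (forall a, I a -> f a <> 0) ->
  forall s t, I s -> I t -> 0 < f s * f t.
Proof.
  intros hc hn s t Hs Ht. destruct (Rtotal_order s t) as [h|[h|h]].
  - apply sign_lt; auto.
  - subst. pose proof (hn t Ht). destruct (Rlt_or_le 0 (f t)); nra.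
  - rewrite Rmult_comm. apply sign_lt; auto.
Qed.

Lemma sig_const : exists s0, (s0 = 1 \/ s0 = -1) /\ forall s, I s -> sig s = s0.
Proof.
  assert (hc : forall a, I a -> continuity_pt x2 a).
  { intros a Ha. apply derivable_continuous_pt. apply ex_derive_Reals_0. exact (hx2 1%nat a Ha). }
  assert (hn : forall a, I a -> x2 a <> 0).
  { intros a Ha h. destruct (M2 a Ha) as [_ hk]. apply hk. rewrite h; ring. }
  destruct HI as [[s0 H0] _].
  destruct (Rlt_or_le 0 (x2 s0)) as [h|h].
  - exists (-1). split; auto. intros s Hs. apply (M8 s Hs).
    pose proof (sign_const x2 hc hn s0 s H0 Hs). nra.
  - assert (x2 s0 < 0) by (pose proof (hn s0 H0); lra).
    exists 1. split; auto. intros s Hs. apply (M8 s Hs).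
    pose proof (sign_const x2 hc hn s0 s H0 Hs). nra.
Qed.

Lemma final : (general_helix_on I (normal beta) <-> C_slant_helix_on I beta) /\ (C_slant_helix_on I beta <-> slant_helix_on I alpha).
Proof.
  destruct sig_const as [s0 [hs0 hsig]].
  assert (hs2 : s0 * s0 = 1) by (destruct hs0; subst; ring).
  assert (hC : forall s, I s -> Cvec beta s = vscal s0 (normal alpha s)).
  { intros s Hs. rewrite M6, hsig by auto. transitivity (vscal s0 (lin (T s) (N s) 0 1 0)).
    - rewrite lin_scal; apply lin_eq; ring.
    - f_equal. symmetry. apply linN. }
  assert (hG : forall s, I s -> vscal (/ vnorm (vD (normal beta) s)) (vD (normal beta) s) = vscal s0 (normal alpha s)).
  { intros s Hs. rewrite (proj2 (M7 s Hs)), hsig by auto. transitivity (vscal s0 (lin (T s) (N s) 0 1 0)).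
    - rewrite lin_scal; apply lin_eq; ring.
    - f_equal. symmetry. apply linN. }
  assert (Q1 : C_slant_helix_on I beta <-> slant_helix_on I alpha).
  { unfold C_slant_helix_on, slant_helix_on. split.
    - intros [u [c [hu h]]]. exists u, (s0 * c). split; auto. intros s Hs.
      specialize (h s Hs). rewrite hC, dot_scall in h by auto. rewrite <- h.
      transitivity (s0 * s0 * vdot (normal alpha s) u); [rewrite hs2; ring| ring].
    - intros [u [c [hu h]]]. exists u, (s0 * c). split; auto. intros s Hs.
      rewrite hC, dot_scall, h by auto. auto. }
  split; auto.
  unfold general_helix_on. rewrite Q1. unfold slant_helix_on. split.
  - intros [_ [u [c [hu h]]]]. exists u, (s0 * c). split; auto. intros s Hs.
    specialize (h s Hs). rewrite hG, dot_scall in h by auto. rewrite <- h.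
    transitivity (s0 * s0 * vdot (normal alpha s) u); [rewrite hs2; ring| ring].
  - intros [u [c [hu h]]]. split.
    + intros s Hs; apply (proj1 (M7 s Hs)).
    + exists u, (s0 * c). split; auto. intros s Hs. rewrite hG, dot_scall, h by auto. auto.
Qed.
End Main.

Theorem theorem15 (I : R -> Prop) (alpha beta : R -> V3)
  (HI : nonempty_open_interval I)
  (Halpha : unit_speed_frenet_on I alpha)
  (Hbeta : osculating_mate_on I alpha beta) :
  (general_helix_on I (normal beta) <-> C_slant_helix_on I beta) /\
  (C_slant_helix_on I beta <-> slant_helix_on I alpha).
Proof.
  destruct Hbeta as [x1 [x2 [hx1 [hx2 [hsum [hb1 [hperp Hbf]]]]]]].
  apply (final I HI alpha beta Halpha x1 x2); auto.
Qed.
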